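(* Let $n\equiv 2\pmod 4$. Let $E$ be a non-empty subset of $\{1,3,\dots,n-1\}$, let $I\subseteq\{0,1,\dots,n/2\}$, and suppose $E\cap\{i,n-i\}=\emptyset$ for all $i\in I$. Then the hypercube $Q_n$ admits a $D$-magic labeling for $$D=E\cup\bigcup_{i\in I}\{i,n-i\}.$$
   Context: The hypercube $Q_n$ has vertex set $\mathbb{F}_2^n$, two vertices adjacent iff they differ in exactly one coordinate; $d(x,y)$ is the graph distance. For a set of distances $D$ and a vertex $x$ of a graph $G$, $N_D(x)=\{y\in V(G): d(x,y)\in D\}$. For a graph $G$ of order $N$, a $D$-magic labeling is a bijection $f:V(G)\to\{1,\dots,N\}$ for which there exists a constant $k$ with $\sum_{y\in N_D(x)}f(y)=k$ for every vertex $x$. *)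

(* Defs.v *)
From mathcomp Require Import all_boot.
Set Implicit Arguments. Unset Strict Implicit. Unset Printing Implicit Defensive.

Definition vert (n : nat) := {ffun 'I_n -> bool}.

Definition qadj (n : nat) (x y : vert n) : bool :=
  #|[set i : 'I_n | x i != y i]| == 1.

Fixpoint reach (n : nat) (k : nat) (x y : vert n) : bool :=
  match k with
  | 0 => x == y
  | k'.+1 => (x == y) || [exists z : vert n, qadj x z && reach k' z y]
  end.

(* graph distance in Q_n: least k such that y is reachable from x in k steps
   (searching k < 2^n, which suffices since Q_n is connected with 2^n vertices) *)
Definition qdist (n : nat) (x y : vert n) : nat :=
  find (fun k => reach k x y) (iota 0 (2 ^ n)).

Definition ND (n : nat) (D : pred nat) (x : vert n) : {set vert n} :=
  [set y | D (qdist x y)].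

(* D-magic labeling: f is a bijection V(Q_n) -> {1,...,2^n} (injective with values
   in {1..2^n}, and #|V| = 2^n) with constant D-neighbourhood sums. *)
Definition D_magic_labeling (n : nat) (D : pred nat) (f : vert n -> nat) : Prop :=
  injective f /\ (forall x, 1 <= f x <= 2 ^ n) /\
  exists k : nat, forall x : vert n, \sum_(y in ND D x) f y = k.

(* Main.v *)
Require Import Defs.
From mathcomp Require Import all_boot.
From mathcomp Require Import zify.
Set Implicit Arguments. Unset Strict Implicit. Unset Printing Implicit Defensive.

Definition xorv n (x y : vert n) : vert n := [ffun k => x k (+) y k].
Definition negv n (y : vert n) : vert n := [ffun k => ~~ y k].
Definition wt n (z : vert n) : nat := \sum_(k < n) z k.
Definition ham n (x y : vert n) := wt (xorv x y).
Definition par n (T : pred 'I_n) (z : vert n) : bool := odd (\sum_(k < n | T k) z k).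

Lemma card_neq n (x y : vert n) : #|[set i | x i != y i]| = ham x y.
Proof.
rewrite /ham /wt -sum1_card big_mkcond /=; apply: eq_bigr => i _.
by rewrite in_set ffunE; case: (x i); case: (y i).
Qed.

Lemma ham_le n (x y : vert n) : ham x y <= n.
Proof.
rewrite /ham /wt -[X in _ <= X]card_ord -sum1_card.
by apply: leq_sum => i _; rewrite leq_b1.
Qed.

Lemma ham0 n (x y : vert n) : (ham x y == 0) = (x == y).
Proof.
rewrite /ham /wt sum_nat_eq0; apply/forallP/eqP => [H|->].
  by apply/ffunP => i; move: (H i); rewrite ffunE; case: (x i); case: (y i).
by move=> i; rewrite ffunE addbb.
Qed.

Lemma ham_tri n (x y z : vert n) : ham x y <= ham x z + ham z y.
Proof.
rewrite /ham /wt -big_split /=; apply: leq_sum => i _; rewrite !ffunE.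
by case: (x i); case: (y i); case: (z i).
Qed.

Lemma reach_ham n k (x y : vert n) : reach k x y = (ham x y <= k).
Proof.
elim: k x => [|k IH] x /=; first by rewrite leqn0 ham0.
apply/idP/idP.
  case/orP => [/eqP->|/existsP [z /andP [Hz Hr]]].
    by have := ham0 y y; rewrite eqxx => /eqP ->.
  rewrite IH in Hr; move: Hz; rewrite /qadj card_neq => /eqP Hz.
  by apply: leq_trans (ham_tri x y z) _; rewrite Hz add1n ltnS.
move=> H; case: (boolP (x == y)) => //= Hxy.
have : ~~ [forall i, x i == y i].
  by apply: contra Hxy => /forallP H2; apply/eqP/ffunP => i; apply/eqP.
rewrite negb_forall => /existsP [i Hi].
apply/existsP; exists [ffun k => if k == i then y k else x k].
apply/andP; split.
  rewrite /qadj card_neq /ham /wt (bigD1 i) //= big1 ?addn0.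
    by rewrite !ffunE eqxx; case: (x i) Hi; case: (y i).
  by move=> j /negbTE Hj; rewrite !ffunE Hj addbb.
rewrite IH; move: H; rewrite /ham /wt (bigD1 i) //= [X in _ -> X <= _](bigD1 i) //=.
rewrite !ffunE eqxx addbb add0n.
have Hxi : x i (+) y i = true by case: (x i) Hi; case: (y i).
rewrite Hxi add1n ltnS => H; apply: leq_trans H; rewrite leq_eqVlt; apply/orP; left; apply/eqP.
by apply: eq_bigr => j /negbTE Hj; rewrite !ffunE Hj.
Qed.

Lemma find_iota_le h N : h < N -> find (fun k => h <= k) (iota 0 N) = h.
Proof.
move=> hN; rewrite -(subnKC (ltnW hN)) iotaD find_cat size_iota.
have -> : has (fun k => h <= k) (iota 0 h) = false.
  by apply/hasP => [[k]]; rewrite mem_iota add0n => /andP [_ H1] H2; lia.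
rewrite add0n; case E: (N - h) => [|r]; first by move: hN; rewrite -subn_gt0 E.
by rewrite /= leqnn addn0.
Qed.

Lemma qdist_ham n (x y : vert n) : qdist x y = ham x y.
Proof.
rewrite /qdist (@eq_find _ _ (fun k => ham x y <= k)); last by move=> k; rewrite reach_ham.
apply: find_iota_le; apply: leq_ltn_trans (ham_le x y) _; exact: ltn_expl.
Qed.


Lemma bits_lt (b : nat -> bool) N : \sum_(j < N) b j * 2^j < 2^N.
Proof.
elim: N => [|N IH]; first by rewrite big_ord0.
rewrite big_ord_recr /= expnS.
have : b N * 2 ^ N <= 2 ^ N by case: (b N); rewrite ?mul1n ?mul0n.
move: IH; move: (\sum_(i < N) _) (b N * 2 ^ N) (2 ^ N) => s t p; lia.
Qed.

Lemma bits_inj (b b' : nat -> bool) N :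
  \sum_(j < N) b j * 2^j = \sum_(j < N) b' j * 2^j -> forall j, j < N -> b j = b' j.
Proof.
elim: N => [|N IH] H j hj; first by [].
move: H; rewrite !big_ord_recr /= => H.
have h1 := bits_lt b N; have h2 := bits_lt b' N.
have EN : b N = b' N.
  move: H h1 h2; case: (b N); case: (b' N) => //=; rewrite ?mul1n ?mul0n;
  move: (\sum_(i < N) b i * _) (\sum_(i < N) b' i * _) (2 ^ N) => s s' p; lia.
move: H; rewrite EN => /eqP; rewrite eqn_add2r => /eqP H.
case: (ltngtP j N) => [hjN|hNj|->]; [exact: IH H _ hjN | lia | exact EN].
Qed.


Definition sig n (p : 'I_n -> 'I_n) (z : vert n) : vert n := [ffun k => z (p k)].
Definition ones n : vert n := [ffun => true].

Lemma sum_tr n (p : 'I_n -> 'I_n) (T : pred 'I_n) (z : 'I_n -> nat) :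
  involutive p -> (forall k, T (p k) = ~~ T k) ->
  \sum_(k | T k) z (p k) = \sum_(k | ~~ T k) z k.
Proof.
move=> Hi Ht; rewrite [RHS](reindex_inj (inv_inj Hi)) /=.
by apply: eq_bigl => k; rewrite Ht negbK.
Qed.

Lemma wt_split n (T : pred 'I_n) (z : vert n) :
  wt z = \sum_(k | T k) z k + \sum_(k | ~~ T k) z k.
Proof. by rewrite /wt (bigID T). Qed.

Lemma par_sig n (p : 'I_n -> 'I_n) (T : pred 'I_n) (z : vert n) :
  involutive p -> (forall k, T (p k) = ~~ T k) ->
  par T (sig p z) = odd (wt z) (+) par T z.
Proof.
move=> Hi Ht; rewrite /par (wt_split T z) oddD.
rewrite (eq_bigr (fun k => nat_of_bool (z (p k)))); last by move=> k _; rewrite ffunE.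
rewrite (sum_tr (fun k => nat_of_bool (z k)) Hi Ht).
by rewrite addbC addbA addbb.
Qed.

Lemma wt_sig n (p : 'I_n -> 'I_n) (z : vert n) : involutive p -> wt (sig p z) = wt z.
Proof.
move=> Hi; rewrite /wt (reindex_inj (inv_inj Hi)) /=.
by apply: eq_bigr => k _; rewrite ffunE Hi.
Qed.

Lemma card_tr n (p : 'I_n -> 'I_n) (T : pred 'I_n) :
  involutive p -> (forall k, T (p k) = ~~ T k) ->
  \sum_(k | T k) 1 + \sum_(k | T k) 1 = n.
Proof.
move=> Hi Ht.
have := sum_tr (fun _ => 1) Hi Ht => /= H.
rewrite {2}H -[in RHS](card_ord n) -sum1_card [RHS](bigID T) /=; done.
Qed.

Lemma par_xor n (T : pred 'I_n) (a b : vert n) : par T (xorv a b) = par T a (+) par T b.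
Proof.
rewrite /par -oddD.
have H : \sum_(k | T k) xorv a b k + (\sum_(k | T k) (a k && b k)).*2 =
         \sum_(k | T k) a k + \sum_(k | T k) b k.
  rewrite -big_split -muln2 big_distrl -big_split /=; apply: eq_bigr => k _.
  by rewrite ffunE; case: (a k); case: (b k).
by rewrite -H oddD odd_double addbF.
Qed.

Lemma par_ones n (p : 'I_n -> 'I_n) (T : pred 'I_n) m :
  involutive p -> (forall k, T (p k) = ~~ T k) -> n = m + m -> odd m ->
  par T (ones n) = true.
Proof.
move=> Hi Ht hn hm; rewrite /par.
rewrite (eq_bigr (fun _ => 1)); last by move=> k _; rewrite ffunE.
have H := card_tr Hi Ht.
have -> : \sum_(k | T k) 1 = m by lia.
by [].
Qed.

Lemma negv_xor n (y : vert n) : negv y = xorv y (ones n).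
Proof. by apply/ffunP => k; rewrite !ffunE addbT. Qed.

Lemma par_neg n (p : 'I_n -> 'I_n) (T : pred 'I_n) m (y : vert n) :
  involutive p -> (forall k, T (p k) = ~~ T k) -> n = m + m -> odd m ->
  par T (negv y) = ~~ par T y.
Proof.
move=> Hi Ht hn hm; rewrite negv_xor par_xor (par_ones Hi Ht hn hm).
by rewrite addbT.
Qed.

Lemma xorvK n (x w : vert n) : xorv x (xorv x w) = w.
Proof. by apply/ffunP => k; rewrite !ffunE addKb. Qed.

Lemma negvK n (y : vert n) : negv (negv y) = y.
Proof. by apply/ffunP => k; rewrite !ffunE negbK. Qed.

Lemma sigK n (p : 'I_n -> 'I_n) (z : vert n) : involutive p -> sig p (sig p z) = z.
Proof. by move=> Hi; apply/ffunP => k; rewrite !ffunE Hi. Qed.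

Lemma ham_sig n (p : 'I_n -> 'I_n) (x y : vert n) : involutive p ->
  ham x (xorv x (sig p (xorv x y))) = ham x y.
Proof. by move=> Hi; rewrite /ham xorvK wt_sig. Qed.

Lemma ham_neg n (x y : vert n) : ham x (negv y) = n - ham x y.
Proof.
rewrite /ham /wt.
have : \sum_(k < n) xorv x (negv y) k + \sum_(k < n) xorv x y k = n.
  rewrite -big_split /= -[X in _ = X]card_ord -sum1_card; apply: eq_bigr => k _.
  by rewrite !ffunE; case: (x k); case: (y k).
lia.
Qed.

Lemma card_half n (p : 'I_n -> 'I_n) (T : pred 'I_n) m :
  involutive p -> (forall k, T (p k) = ~~ T k) -> n = m + m ->
  \sum_(k | T k) 1 = m.
Proof. move=> Hi Ht hn; have H := card_tr Hi Ht; lia. Qed.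


Definition pn (m j k : nat) : nat :=
  if j <= m then (if k < m then k + m else k - m) else
  if k == 0 then j - m else if k == j - m then 0 else if k == m then j
  else if k == j then m else if k < m then k + m else k - m.
Definition Tn (m j k : nat) : bool :=
  if j < m then ((k < m) && (k != j)) || (k == j + m)
  else if j == m then k < m else (0 < k < m) || (k == j).
Lemma pn_lt m j k : j < m + m -> k < m + m -> pn m j k < m + m.
Proof. rewrite /pn => *; repeat case: ifP => ?; lia. Qed.
Lemma pn_inv m j k : j < m + m -> k < m + m -> pn m j (pn m j k) = k.
Proof. rewrite {2}/pn => *.
case E1: (j <= m); case E2: (k == 0); case E3: (k == j - m); case E4 : (k == m);
case E5: (k == j); case E6: (k < m); rewrite /pn; repeat case: ifP => ?; lia. Qed.
Lemma Tn_pn m j k : j < m + m -> k < m + m -> Tn m j (pn m j k) = ~~ Tn m j k.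
Proof. rewrite /pn /Tn => *; repeat case: ifP => ?; lia. Qed.

Definition pio (n m j : nat) (k : 'I_n) : 'I_n := insubd k (pn m j k).
Definition Tp (n m j : nat) : pred 'I_n := fun k => Tn m j k.

Lemma pio_val n m j (k : 'I_n) : n = m + m -> j < n -> val (pio m j k) = pn m j k.
Proof.
move=> hn hj; rewrite /pio val_insubd; case: ifP => // /negP; case.
by subst n; apply: pn_lt.
Qed.

Lemma pio_inv n m j : n = m + m -> j < n -> involutive (@pio n m j).
Proof.
move=> hn hj k; apply: val_inj; rewrite !pio_val //.
by subst n; apply: pn_inv.
Qed.

Lemma Tp_pio n m j (k : 'I_n) : n = m + m -> j < n -> Tp m j (pio m j k) = ~~ Tp m j k.
Proof.
move=> hn hj; rewrite /Tp pio_val //; subst n; exact: Tn_pn.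
Qed.

Definition phi n m j (x y : vert n) : vert n :=
  if odd (ham x y) then xorv x (sig (@pio n m j) (xorv x y)) else negv y.

Lemma odd_ham_neg n m (x y : vert n) : n = m + m -> odd (ham x (negv y)) = odd (ham x y).
Proof.
move=> hn; rewrite ham_neg oddB ?ham_le //; have -> : odd n = false by rewrite hn oddD addbb.
by [].
Qed.

Lemma phi_inv n m j x : n = m + m -> j < n -> involutive (@phi n m j x).
Proof.
move=> hn hj y; rewrite {2}/phi; case: ifP => Ho; rewrite /phi.
  rewrite ham_sig ?Ho ?xorvK ?sigK ?xorvK //; exact: pio_inv.
by rewrite (odd_ham_neg _ _ hn) Ho negvK.
Qed.

Lemma phi_g n m j x y : n = m + m -> odd m -> j < n ->
  par (Tp m j) (@phi n m j x y) = ~~ par (Tp m j) y.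
Proof.
move=> hn hm hj; rewrite /phi; case: ifP => Ho.
  rewrite par_xor (par_sig _ (pio_inv hn hj)) ?Ho ?par_xor.
    by case: (par _ x); case: (par _ y).
  by move=> k; apply: Tp_pio.
rewrite (@par_neg n (@pio n m j) (Tp m j) m y (pio_inv hn hj) _ hn hm) //.
by move=> k; apply: Tp_pio.
Qed.

Lemma phi_D n m j x y (D : pred nat) : n = m + m ->
  (forall d, d <= n -> ~~ odd d -> D (n - d) = D d) -> j < n ->
  D (ham x (@phi n m j x y)) = D (ham x y).
Proof.
move=> hn HD hj; rewrite /phi; case: ifP => Ho.
  by rewrite ham_sig //; apply: pio_inv.
by rewrite ham_neg HD ?ham_le ?Ho.
Qed.


Lemma sum_split n (P Q : pred 'I_n) (a : 'I_n) (w : 'I_n -> nat) :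
  (forall k, P k = Q k || (k == a)) -> ~~ Q a ->
  \sum_(k | P k) w k = w a + \sum_(k | Q k) w k.
Proof.
move=> HP HQ; rewrite (bigD1 a) ?HP ?eqxx ?orbT //; congr (_ + _).
apply: eq_bigl => k; rewrite HP.
by case: (k =P a) => [->|_]; rewrite ?(negbTE HQ) ?eqxx ?orbF ?andbT ?andbF.
Qed.

Lemma odd_same (a b : bool) s : odd (a + s) = false -> odd (b + s) = false -> a = b.
Proof. by rewrite !oddD !oddb; case: a; case: b; case: (odd s). Qed.

Lemma kernel n m (w : vert n) : n = m + m -> odd m ->
  (forall j, j < n -> par (Tp m j) w = false) -> forall k : 'I_n, w k = false.
Proof.
move=> hn hm H.
have n0 : 0 < n by rewrite hn; move: hm; case: (m) => //.
pose i0 : 'I_n := Ordinal n0.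
pose wn k := w (insubd i0 k).
have va : forall k, k < n -> val (insubd i0 k) = k.
  by move=> k hk; rewrite val_insubd hk.
have wk : forall k : 'I_n, w k = wn k by move=> k; rewrite /wn valKd.
have Z : par (Tp m m) w = false by apply: H; lia.
have X : forall j, j < m -> wn (j + m) = wn j.
  move=> j hj.
  have hjm : j + m < n by lia.
  have hj' : j < n by lia.
  pose Q : pred 'I_n := fun k => (val k < m) && (val k != j).
  have e1 := @sum_split n (Tp m j) Q (insubd i0 (j + m)) (fun k => nat_of_bool (w k)).
  have e2 := @sum_split n (Tp m m) Q (insubd i0 j) (fun k => nat_of_bool (w k)).
  have Hj := H j hj'.
  rewrite /par in Z Hj.
  rewrite e1 in Hj; last first.
  - rewrite /Q va //; lia.
  - move=> k; rewrite /Tp /Tn /Q -val_eqE va //= hj; lia.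
  rewrite e2 in Z; last first.
  - rewrite /Q va //; lia.
  - move=> k; rewrite /Tp /Tn /Q -val_eqE va //= ltnn eqxx; lia.
  exact: odd_same Hj Z.
have Y : forall j, m < j -> j < n -> wn j = wn 0.
  move=> j hj hjn.
  pose Q : pred 'I_n := fun k => (0 < val k < m).
  have e1 := @sum_split n (Tp m j) Q (insubd i0 j) (fun k => nat_of_bool (w k)).
  have e2 := @sum_split n (Tp m m) Q (insubd i0 0) (fun k => nat_of_bool (w k)).
  have Hj := H j hjn.
  rewrite /par in Z Hj.
  rewrite e1 in Hj; last first.
  - rewrite /Q va //; lia.
  - move=> k; rewrite /Tp /Tn /Q -val_eqE va //=.
    have -> : (j < m) = false by lia.
    have -> : (j == m) = false by lia.
    lia.
  rewrite e2 in Z; last first.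
  - rewrite /Q va //; lia.
  - move=> k; rewrite /Tp /Tn /Q -val_eqE va //= ltnn eqxx; lia.
  exact: odd_same Hj Z.
have All : forall k, k < n -> wn k = wn 0.
  have Alow : forall k, k < m -> wn k = wn 0.
    move=> k hk; case: k hk => [//|k] hk.
    by rewrite -X // Y //; lia.
  move=> k hk; case: (ltnP k m) => hkm; first exact: Alow.
  have -> : k = (k - m) + m by lia.
  rewrite X; last by lia.
  apply: Alow; lia.
have W0 : wn 0 = false.
  move: Z; rewrite /par.
  rewrite (eq_bigr (fun _ => 1 * wn 0)); last by move=> k _; rewrite mul1n wk All.
  rewrite -big_distrl /=.
  have hmn : m < n by lia.
  rewrite (@card_half n (@pio n m m) (Tp m m) m (pio_inv hn hmn)) //; last first.
    by move=> k; apply: Tp_pio.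
  by rewrite oddM hm oddb.
by move=> k; rewrite wk All.
Qed.


Lemma count_half n m j (x : vert n) (D : pred nat) : n = m + m -> odd m -> j < n ->
  (forall d, d <= n -> ~~ odd d -> D (n - d) = D d) ->
  \sum_(y | D (ham x y)) par (Tp m j) y + \sum_(y | D (ham x y)) par (Tp m j) y
  = \sum_(y | D (ham x y)) 1.
Proof.
move=> hn hm hj HD.
have e : \sum_(y | D (ham x y)) par (Tp m j) y =
         \sum_(y | D (ham x y)) ~~ par (Tp m j) y.
  rewrite [LHS](reindex_inj (inv_inj (phi_inv x hn hj))) /=.
  apply: eq_big => y; first exact: phi_D.
  by move=> _; rewrite phi_g.
rewrite {2}e -big_split /=; apply: eq_bigr => y _.
by case: (par _ y).
Qed.

Lemma card_const n (x : vert n) (D : pred nat) :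
  \sum_(y | D (ham x y)) 1 = \sum_(y : vert n | D (wt y)) 1.
Proof.
have Hi : involutive (@xorv n x) by move=> y; apply: xorvK.
rewrite [LHS](reindex_inj (inv_inj Hi)) /=.
by apply: eq_bigl => y; rewrite /ham xorvK.
Qed.

Unset Implicit Arguments.

Theorem theorem3p1 (n : nat) (E I : pred nat) :
  n %% 4 = 2 ->
  (exists e, E e) ->
  (forall e, E e -> [/\ odd e, 1 <= e & e <= n - 1]) ->
  (forall i, I i -> i <= n %/ 2) ->
  (forall i, I i -> ~~ E i /\ ~~ E (n - i)) ->
  exists f : vert n -> nat,
    @D_magic_labeling n (fun d => E d || [exists i : 'I_(n %/ 2).+1, I i && ((d == i) || (d == n - i))]) f.
Proof.
move=> hn4 _ HE _ _.
set D := (fun d => _ || _).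
set m := n %/ 2.
have hn : n = m + m by rewrite /m; lia.
have hm : odd m.
  have -> : m = (n %/ 4).*2 + 1 by rewrite /m -muln2; lia.
  by rewrite oddD odd_double.
have HD : forall d, d <= n -> ~~ odd d -> D (n - d) = D d.
  move=> d hd hod; rewrite /D.
  have E1 : E d = false.
    by apply/negP => /HE [ho _ _]; move: hod; rewrite ho.
  have E2 : E (n - d) = false.
    apply/negP => /HE [ho _ _]; move: ho; rewrite oddB // (negbTE hod) addbF.
    by rewrite hn oddD addbb.
  rewrite E1 E2 /=; apply: eq_existsb => i; congr (_ && _).
  have := ltn_ord i; rewrite -/m => hi; lia.
exists (fun y => 1 + \sum_(j < n) par (Tp m j) y * 2 ^ j).
split; [|split].
- move=> y y' /eqP; rewrite eqn_add2l => /eqP Hs.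
  have Hb := @bits_inj (fun j => par (Tp m j) y) (fun j => par (Tp m j) y') n Hs.
  apply/ffunP => k.
  have Hk : forall j, j < n -> par (Tp m j) (xorv y y') = false.
    by move=> j hj; rewrite par_xor (Hb j hj) addbb.
  have := @kernel n m (xorv y y') hn hm Hk k; rewrite ffunE.
  by case: (y k); case: (y' k).
- move=> y; rewrite add1n; apply/andP; split => //.
  exact: (@bits_lt (fun j => par (Tp m j) y) n).
set C := \sum_(y : vert n | D (wt y)) 1.
exists (C + \sum_(j < n) (C./2) * 2 ^ j) => x.
rewrite /ND (eq_bigl (fun y => D (ham x y))); last by move=> y; rewrite in_set qdist_ham.
rewrite big_split /= card_const; congr (_ + _).
rewrite exchange_big /=; apply: eq_bigr => j _.
rewrite -big_distrl /=; congr (_ * _).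
have := count_half x hn hm (ltn_ord j) HD.
rewrite card_const -/C => <-.
by rewrite addnn doubleK.
Qed.
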